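(* In the DGL-test-based classification setting described in the context, with $M\ge2$, $n,N\ge1$, $\alpha=N/n$ and $D=\min_{i\neq j}V(P_i,P_j)$, the classification error probability satisfies, for every prior $(\pi_1,\dots,\pi_M)$, $$\Pr[e_{\mathrm{CL}}]\le 2M\exp\!\Big(-n\Big(\frac{\alpha D^2}{2(2+\sqrt\alpha)^2}-\max\Big\{\frac{2\ln(M-1)}{n},\frac{|\mathcal X|\ln 2}{n}\Big\}\Big)\Big).$$
   Context: Setting: $\mathcal X$ is a finite alphabet and $P_1,\dots,P_M$ are (unknown) distributions on $\mathcal X$. For distributions $P,Q$ on $\mathcal X$, $V(P,Q)=\max_{F\subseteq\mathcal X}|P(F)-Q(F)|=\frac12\sum_{a}|P(a)-Q(a)|$. Training sequences $\vec t_i^{\,N}=(t_{i1},\dots,t_{iN})$, $i=1,\dots,M$, are mutually independent, with $\vec t_i^{\,N}$ i.i.d. from $P_i$; $T_i(a)=\frac1N\#\{k:t_{ik}=a\}$ is its empirical distribution, and $T_i(A)=\sum_{a\in A}T_i(a)$. Under hypothesis $\mathcal H_i$, the test sequence $\vec x^{\,n}=(x_1,\dots,x_n)$ is i.i.d. from $P_i$ and independent of the training sequences. Classifier (DGL test with nominal distributions $T_i$): let $\mathcal A=\{A_{k,l}:1\le k<l\le M\}$ with $A_{k,l}=\{a\in\mathcal X: T_k(a)\ge T_l(a)\}$, let $\mu_n(A)=\frac1n\#\{m: x_m\in A\}$, define the score $s_j=\max_{A\in\mathcal A}|T_j(A)-\mu_n(A)|$, and output any index $\hat\imath$ minimizing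 $s_j$ over $j$ (ties broken arbitrarily). Given a prior $\pi_i>0$, $\sum_i\pi_i=1$, the classification error probability is $\Pr[e_{\mathrm{CL}}]=\sum_{i=1}^M\pi_i\Pr[\hat\imath\neq i\mid\mathcal H_i]$, the probability taken over both the test and training sequences. *)

(* Defs.v *)
From mathcomp Require Import all_boot all_order all_algebra.
From mathcomp Require Import all_classical all_reals all_analysis.
Set Implicit Arguments. Unset Strict Implicit. Unset Printing Implicit Defensive.
Import Order.TTheory GRing.Theory Num.Theory.
Local Open Scope ring_scope.

Section DGL.
Variables (R : realType) (X : finType).

Definition is_distr (P : X -> R) := (forall a, 0 <= P a) /\ \sum_(a : X) P a = 1.

Definition tvdist (P Q : X -> R) : R := 2^-1 * \sum_(a : X) `|P a - Q a|.

(* D = min_{i <> j} V(P_i,P_j); the neutral element 1 is harmless since V <= 1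
   for distributions and M >= 2 makes the range nonempty *)
Definition Dmin (M : nat) (P : 'I_M -> X -> R) : R :=
  \big[Num.min/1]_(i < M) \big[Num.min/1]_(j < M | j != i) tvdist (P i) (P j).

Variables (M N n : nat).

Definition trainT := {ffun 'I_M -> {ffun 'I_N -> X}}.
Definition testT := {ffun 'I_n -> X}.

Definition Temp (t : trainT) (i : 'I_M) (a : X) : R :=
  #|[set k : 'I_N | t i k == a]|%:R / N%:R.
Definition TempS (t : trainT) (i : 'I_M) (A : {set X}) : R :=
  \sum_(a in A) Temp t i a.

Definition Aset (t : trainT) (k l : 'I_M) : {set X} :=
  [set a | Temp t l a <= Temp t k a].

Definition mun (x : testT) (A : {set X}) : R :=
  #|[set m : 'I_n | x m \in A]|%:R / n%:R.

(* score s_j = max_{k<l} |T_j(A_{k,l}) - mu_n(A_{k,l})| (all terms are >= 0) *)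
Definition score (t : trainT) (x : testT) (j : 'I_M) : R :=
  \big[Num.max/0]_(k < M) \big[Num.max/0]_(l < M | (k < l)%N)
     `|TempS t j (Aset t k l) - mun x (Aset t k l)|.

Definition DGL_rule (dec : trainT -> testT -> 'I_M) :=
  forall t x j, score t x (dec t x) <= score t x j.

Definition Ptrain (P : 'I_M -> X -> R) (t : trainT) : R :=
  \prod_(i < M) \prod_(k < N) P i (t i k).
Definition Ptest (P : 'I_M -> X -> R) (i : 'I_M) (x : testT) : R :=
  \prod_(m < n) P i (x m).

Definition err_CL (P : 'I_M -> X -> R) (pi : 'I_M -> R)
    (dec : trainT -> testT -> 'I_M) : R :=
  \sum_(i < M) pi i *
    \sum_(t : trainT) \sum_(x : testT)
       (if dec t x != i then Ptrain P t * Ptest P i x else 0).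

End DGL.

(* Main.v *)
Require Import Defs.
From mathcomp Require Import all_boot all_order all_algebra.
From mathcomp Require Import all_classical all_reals all_analysis.
From mathcomp Require Import ring lra.
Set Implicit Arguments. Unset Strict Implicit. Unset Printing Implicit Defensive.
Import Order.TTheory GRing.Theory Num.Theory.
Local Open Scope ring_scope.

Section S.
Variable R : realType.

Lemma Fpos (p x : R) : 0 <= p <= 1 -> 0 < 1 - p + p * expR x.
Proof.
move=> /andP[p0 p1]; have e := expR_gt0 x.
case: (ltrP p 1) => hp; first by have := mulr_ge0 p0 (ltW e); lra.
have -> : p = 1 by lra.
by rewrite subrr add0r mul1r.
Qed.

Lemma qstep (p x : R) : 0 <= p <= 1 -> 0 <= x ->
  p * expR x / (1 - p + p * expR x) - p <= x / 4.
Proof.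
move=> hp x0.
pose F := fun y : R => 1 - p + p * expR y.
pose r := fun y : R => y / 4 + p - p * expR y * (F y)^-1.
have dF : forall y : R, is_derive y 1 F (p * expR y).
  move=> y; rewrite /F; apply: is_derive_eq.
  by rewrite add0r mul1r.
have dr : forall y : R, is_derive y 1 r (4^-1 - p * expR y * (1 - p) / (F y)^+2).
  move=> y; rewrite /r /=.
  have Fy : F y != 0 by rewrite gt_eqF // Fpos.
  have dV := is_deriveV Fy (dF y).
  apply: is_derive_eq.
  rewrite /GRing.scale /=.
  move: Fy; rewrite /F => Fy.
  by field.
have der : forall y : R, derivable r y 1 by move=> y; case: (dr y).
have Hd : forall y : R, y \in `]0, +oo[ -> 0 <= (r^`()%classic) y.
  move=> y _; rewrite derive1E; case: (dr y) => _ ->.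
  have Fy : 0 < F y by apply: Fpos.
  rewrite subr_ge0 ler_pdivrMr ?exprn_gt0 //.
  have e := expR_gt0 y.
  rewrite /F; move: Fy; rewrite /F => Fy.
  set b := p * expR y.
  have: 0 <= (1 - p - b) ^+ 2 by apply: sqr_ge0.
  move=> h; nra.
have Hc : {within `[0, +oo[, continuous r}%classic.
  apply: derivable_within_continuous => y _; exact: der.
have H := @ger0_derive1_ndecry R r 0 (fun y _ => der y) Hd Hc 0 x (lexx 0) x0.
have r0 : r 0 = 0.
  by rewrite /r /F expR0 mulr1 subrK invr1 mulr1 mul0r add0r subrr.
move: H; rewrite r0 /r /F => H.
lra.
Qed.

Lemma hoeff_lemma (p l : R) : 0 <= p <= 1 -> 0 <= l ->
  1 - p + p * expR l <= expR (l * p + l ^+ 2 / 8).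
Proof.
move=> hp l0.
pose F := fun y : R => 1 - p + p * expR y.
pose f := fun y : R => F y * expR (- (y * p + y ^+ 2 / 8)).
have dF : forall y : R, is_derive y 1 F (p * expR y).
  move=> y; rewrite /F; apply: is_derive_eq.
  by rewrite add0r mul1r.
have df : forall y : R, is_derive y 1 f
   (expR (- (y * p + y ^+ 2 / 8)) * (p * expR y - F y * (p + y / 4))).
  move=> y; rewrite /f.
  apply: is_derive_eq.
  rewrite /GRing.scale /=.
  by rewrite /F; set E := expR (- _); field.
have der : forall y : R, derivable f y 1 by move=> y; case: (df y).
have Hd : forall y : R, y \in `]0, +oo[ -> (f^`()%classic) y <= 0.
  move=> y; rewrite in_itv /= andbT => y0.
  rewrite derive1E; case: (df y) => _ ->.
  rewrite pmulr_rle0 ?expR_gt0 // subr_le0.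
  have := @qstep p y hp (ltW y0).
  have Fy : 0 < F y by apply: Fpos.
  rewrite -/(F y) => h.
  have : p * expR y / F y <= p + y / 4 by lra.
  rewrite ler_pdivrMr // => h2.
  by apply: (le_trans h2); rewrite mulrC.
have Hc : {within `[0, +oo[, continuous f}%classic.
  apply: derivable_within_continuous => y _; exact: der.
have H := @ler0_derive1_nincry R f 0 (fun y _ => der y) Hd Hc 0 l (lexx 0) l0.
have f0 : f 0 = 1.
  rewrite /f /F expR0 mulr1 subrK expr0n /= mul0r mul0r add0r oppr0.
  by rewrite expR0 mulr1.
move: H; rewrite f0 /f -/(F l) => H.
have E := expR_gt0 (l * p + l ^+ 2 / 8).
rewrite expRN in H.
by rewrite ler_pdivrMr // mul1r in H.
Qed.
End S.


Section Tail.
Variables (R : realType) (X : finType).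

Definition ind (b : bool) : R := if b then 1 else 0.
Definition cnt m (s : {ffun 'I_m -> X}) (F : {set X}) : nat := #|[set k | s k \in F]|.
Definition PF (P : X -> R) (F : {set X}) : R := \sum_(a in F) P a.

Lemma PF_ge0 P F : is_distr P -> 0 <= PF P F.
Proof. by move=> [h _]; rewrite /PF sumr_ge0. Qed.

Lemma PF_le1 P F : is_distr P -> PF P F <= 1.
Proof.
move=> [h1 h2]; rewrite -h2 /PF [X in _ <= X](bigID (mem F)) /= lerDl.
by rewrite sumr_ge0.
Qed.

Lemma cnt_sum m (s : {ffun 'I_m -> X}) F :
  (cnt s F)%:R = \sum_(k < m) ind (s k \in F).
Proof.
rewrite /cnt -sum1_card natr_sum big_mkcond /=.
by apply: eq_bigr => k _; rewrite /ind inE.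
Qed.

Lemma tail (P : X -> R) m (F : {set X}) (e : R) :
  is_distr P -> (0 < m)%N -> 0 <= e ->
  \sum_(s : {ffun 'I_m -> X}) (\prod_(k < m) P (s k)) *
     ind (e <= (cnt s F)%:R / m%:R - PF P F) <= expR (- (2 * m%:R * e ^+ 2)).
Proof.
move=> hP m0 e0.
set p := PF P F; set l := 4 * e.
have mpos : 0 < m%:R :> R by rewrite ltr0n.
have p01 : 0 <= p <= 1 by rewrite PF_ge0 ?PF_le1.
have l0 : 0 <= l by rewrite /l; lra.
have Pge0 : forall a, 0 <= P a by case: hP.
pose g := fun a : X => P a * expR (l * ind (a \in F)).
apply: (@le_trans _ _ (\sum_(s : {ffun 'I_m -> X}) expR (- (l * m%:R * (p + e))) *
                       \prod_(k < m) g (s k))).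
  apply: ler_sum => s _.
  rewrite /g big_split /= mulrCA.
  rewrite -expR_sum -mulr_sumr -cnt_sum -expRD.
  apply: ler_wpM2l; first by apply: prodr_ge0.
  rewrite /ind; case: ifP => h; last by apply: expR_ge0.
  apply: le_trans (expR_ge1Dx _); rewrite lerDl.
  move: h; rewrite lerBrDl ler_pdivlMr // => h.
  have : 0 <= l * ((cnt s F)%:R - m%:R * (p + e)) by apply: mulr_ge0 => //; lra.
  lra.
rewrite -mulr_sumr -(bigA_distr_bigA (fun (_ : 'I_m) a => g a)) /= prodr_const card_ord.
have hs : \sum_(a : X) g a = 1 - p + p * expR l.
  rewrite /g (bigID (mem F)) /=.
  rewrite (eq_bigr (fun a => P a * expR l)); last first.
    by move=> a aF; rewrite /ind aF mulr1.
  rewrite [X in _ + X](eq_bigr (fun a => P a)); last first.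
    by move=> a aF; rewrite /ind (negbTE aF) mulr0 expR0 mulr1.
  rewrite -mulr_suml -/(PF P F) -/p.
  have : \sum_(i | i \notin F) P i = 1 - p.
    case: hP => _ h1; rewrite -h1 (bigID (mem F) predT) /= -/(PF P F) -/p.
    by rewrite addrC addrK.
  move=> ->; lra.
rewrite hs.
apply: (@le_trans _ _ (expR (- (l * m%:R * (p + e))) * expR (l * p + l ^+ 2 / 8) ^+ m)).
  apply: ler_wpM2l; first exact: expR_ge0.
  apply: lerXn2r; rewrite ?nnegrE ?expR_ge0 //; first by have := @Fpos R p l p01; lra.
  exact: hoeff_lemma.
rewrite -expRM_natl -expRD ler_expR /l.
have : 0 <= m%:R * e ^+ 2 :> R by apply: mulr_ge0; [lra | apply: sqr_ge0].
move=> h. rewrite (_ : forall z : R, z ^+ 2 = z * z); last by move=> z; rewrite expr2.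
nra.
Qed.
End Tail.


Section Core.
Variables (R : realType) (X : finType).

Lemma card_ind (I : finType) (Q : pred I) :
  (#|[set k | Q k]|)%:R = \sum_k ind R (Q k).
Proof.
rewrite -sum1_card natr_sum big_mkcond /=.
by apply: eq_bigr => k _; rewrite /ind inE.
Qed.

Lemma sum_ind_eq (b : X) (F : {set X}) :
  \sum_(a in F) ind R (b == a) = ind R (b \in F).
Proof.
case bF: (b \in F).
  rewrite (bigD1 b) //= big1 ?addr0 ?eqxx //.
  by move=> a /andP[_ ab]; rewrite /ind eq_sym (negbTE ab).
rewrite big1 // => a aF; rewrite /ind; case: eqP => // ba.
by move: bF; rewrite ba aF.
Qed.

Lemma TempS_cnt M N (t : trainT X M N) j F :
  TempS R t j F = (cnt (t j) F)%:R / N%:R.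
Proof.
rewrite /TempS /Temp -mulr_suml; congr (_ / _).
rewrite /cnt card_ind.
under eq_bigr do rewrite card_ind.
rewrite exchange_big /=; apply: eq_bigr => k _.
exact: sum_ind_eq.
Qed.

Lemma cnt_compl m (s : {ffun 'I_m -> X}) F :
  (cnt s (~: F))%:R = m%:R - (cnt s F)%:R :> R.
Proof.
rewrite !cnt_sum.
have -> : \sum_(k < m) ind R (s k \in ~: F) = \sum_(k < m) (1 - ind R (s k \in F)).
  by apply: eq_bigr => k _; rewrite /ind inE; case: (s k \in F) => /=; lra.
by rewrite sumrB sumr_const card_ord.
Qed.

Lemma PF_compl (P : X -> R) F : is_distr P -> PF P (~: F) = 1 - PF P F.
Proof.
move=> [_ h]; rewrite -h /PF (bigID (mem F) predT) /=.
rewrite addrC addrK; apply: eq_bigl => a; by rewrite inE.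
Qed.

Lemma two_sided (P : X -> R) m (s : {ffun 'I_m -> X}) d :
  is_distr P -> (0 < m)%N ->
  (forall F, (cnt s F)%:R / m%:R - PF P F < d) ->
  forall F, `|(cnt s F)%:R / m%:R - PF P F| < d.
Proof.
move=> hP m0 h F; rewrite ltr_norml h andbT.
have := h (~: F); rewrite cnt_compl PF_compl // mulrBl divff ?pnatr_eq0 -?lt0n //.
lra.
Qed.

Lemma scheffe (f g : X -> R) (B : {set X}) :
  \sum_(a in B) (f a - g a) <= \sum_(a in [set a | g a <= f a]) (f a - g a).
Proof.
rewrite big_mkcond [X in _ <= X]big_mkcond /=; apply: ler_sum => a _.
rewrite inE; case: (a \in B); case: (lerP (g a) (f a)) => h //; lra.
Qed.

Lemma tv_scheffe (P Q : X -> R) : is_distr P -> is_distr Q ->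
  tvdist P Q = \sum_(a in [set a | Q a <= P a]) (P a - Q a).
Proof.
move=> [_ hP] [_ hQ].
have e : forall a, `|P a - Q a| = 2 * (if a \in [set a | Q a <= P a] then P a - Q a else 0) - (P a - Q a).
  move=> a; rewrite inE; case: (lerP (Q a) (P a)) => h.
    lra.
  lra.
rewrite /tvdist (eq_bigr _ (fun a _ => e a)) sumrB -mulr_sumr -big_mkcond /=.
rewrite [X in _ - X]sumrB hP hQ subrr subr0 mulrA mulVf ?mul1r // pnatr_eq0.
Qed.
End Core.


Section Core2.
Variables (R : realType) (X : finType).

Lemma core M N n (P : 'I_M -> X -> R) (t : trainT X M N) (x : testT X n)
  (i : 'I_M) (d e : R) :
  (0 < N)%N -> (0 < n)%N -> (forall k, is_distr (P k)) -> 0 <= e ->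
  (forall k l, k != l -> 4 * d + 2 * e <= tvdist (P k) (P l)) ->
  (forall j F, (cnt (t j) F)%:R / N%:R - PF (P j) F < d) ->
  (forall k l : 'I_M, (k < l)%N ->
      (cnt x (Aset R t k l))%:R / n%:R - PF (P i) (Aset R t k l) < e /\
      (cnt x (~: Aset R t k l))%:R / n%:R - PF (P i) (~: Aset R t k l) < e) ->
  forall j, j != i -> score R t x i < score R t x j.
Proof.
move=> N0 n0 hP e0 hD hT hX.
have hT' : forall j F, `|TempS R t j F - PF (P j) F| < d.
  by move=> j F; rewrite TempS_cnt; apply: two_sided.
have d0 : 0 < d.
  have := hT' i (Aset R t i i); have := normr_ge0 (TempS R t i (Aset R t i i) - PF (P i) (Aset R t i i)); lra.
have hX' : forall k l : 'I_M, (k < l)%N ->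
    `|mun R x (Aset R t k l) - PF (P i) (Aset R t k l)| < e.
  move=> k l kl; have [h1 h2] := hX k l kl.
  rewrite ltr_norml /mun -/(cnt x _) h1 andbT.
  move: h2; rewrite cnt_compl PF_compl // mulrBl divff ?pnatr_eq0 -?lt0n //.
  lra.
have si : score R t x i < d + e.
  apply: bigmax_lt; first lra.
  move=> k _; apply: bigmax_lt; first lra.
  move=> l kl.
  set A := Aset R t k l.
  have h1 := hT' i A; have h2 := hX' k l kl.
  have := ler_distD (PF (P i) A) (TempS R t i A) (mun R x A).
  rewrite -/A => h3.
  rewrite distrC in h2; lra.
have G : forall k l : 'I_M, (k < l)%N ->
    4 * d + 2 * e - 2 * d < `|TempS R t k (Aset R t k l) - TempS R t l (Aset R t k l)|.
  move=> k l kl.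
  have kl' : k != l by rewrite neq_ltn kl.
  set B := [set a | P l a <= P k a].
  have tv := tv_scheffe (hP k) (hP l).
  have := scheffe (Temp R t k) (Temp R t l) B.
  rewrite sumrB -/(TempS R t k B) -/(TempS R t l B) sumrB.
  rewrite -/(TempS R t k (Aset R t k l)) -/(TempS R t l (Aset R t k l)) => hs.
  have := hD k l kl'; rewrite tv sumrB -/(PF (P k) B) -/(PF (P l) B) => hd.
  have := hT' k B; have := hT' l B.
  move=> /ltr_normlP [h1 h2] /ltr_normlP [h3 h4].
  apply: lt_le_trans (ler_norm _); lra.
move=> j ji.
have [k [l [kl A hA]]] : exists k l : 'I_M, [/\ (k < l)%N,
    4 * d + 2 * e - 2 * d < `|TempS R t i (Aset R t k l) - TempS R t j (Aset R t k l)| &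
    `|mun R x (Aset R t k l) - PF (P i) (Aset R t k l)| < e].
  case: (ltngtP i j) => h.
  - by exists i, j; split => //; [apply: G | apply: hX'].
  - exists j, i; split => //; last by apply: hX'.
    by rewrite distrC; apply: G.
  - by move/eqP: ji; rewrite (val_inj h).
apply: lt_le_trans (_ : `|TempS R t j (Aset R t k l) - mun R x (Aset R t k l)| <= _).
  move: hA A.
  set Q := Aset R t k l.
  have := hT' i Q.
  have := ler_distD (mun R x Q) (TempS R t i Q) (TempS R t j Q).
  have := ler_distD (PF (P i) Q) (TempS R t i Q) (mun R x Q).
  have e1 : `|mun R x Q - TempS R t j Q| = `|TempS R t j Q - mun R x Q| := distrC _ _.
  have e2 : `|PF (P i) Q - mun R x Q| = `|mun R x Q - PF (P i) Q| := distrC _ _.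
  lra.
rewrite /score.
apply: (bigmax_sup k) => //.
by apply: (bigmax_sup l).
Qed.
End Core2.


Section Assembly.
Variables (R : realType) (X : finType).

Lemma card_setX : #|{set X}| = (2 ^ #|X|)%N.
Proof. by rewrite -[LHS]cardsT -powersetT card_powerset cardsT. Qed.

Lemma union_bound (I : finType) (Q : pred I) :
  ind R [exists i, Q i] <= \sum_i ind R (Q i).
Proof.
rewrite /ind; case: existsP => [[i Qi]|_]; last by rewrite sumr_ge0 // => i _; case: ifP.
rewrite (bigD1 i) //= Qi lerDl sumr_ge0 // => j _; by case: ifP.
Qed.

Lemma ind_ge0 b : 0 <= ind R b.
Proof. by rewrite /ind; case: ifP. Qed.

Lemma sum_prod1 (Q : X -> R) m : is_distr Q ->
  \sum_(s : {ffun 'I_m -> X}) \prod_(k < m) Q (s k) = 1.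
Proof.
move=> [_ h].
rewrite -(bigA_distr_bigA (fun (_ : 'I_m) a => Q a)) /=.
by rewrite big1 // => k _.
Qed.

Lemma train_marg M N (P : 'I_M -> X -> R) (j : 'I_M) (f : {ffun 'I_N -> X} -> R) :
  (forall i, is_distr (P i)) ->
  \sum_(t : trainT X M N) Ptrain P t * f (t j) =
  \sum_(s : {ffun 'I_N -> X}) (\prod_(k < N) P j (s k)) * f s.
Proof.
move=> hP.
pose h := fun (i : 'I_M) (s : {ffun 'I_N -> X}) =>
  (\prod_(k < N) P i (s k)) * (if i == j then f s else 1).
have -> : \sum_(t : trainT X M N) Ptrain P t * f (t j) =
          \sum_(t : {ffun 'I_M -> {ffun 'I_N -> X}}) \prod_i h i (t i).
  apply: eq_bigr => t _; rewrite /h big_split /= /Ptrain; congr (_ * _).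
  rewrite (bigD1 j) //= eqxx big1 ?mulr1 // => i /negbTE ->; done.
rewrite -(bigA_distr_bigA h) /= (bigD1 j) //= [X in _ * X]big1 ?mulr1.
  by apply: eq_bigr => s _; rewrite /h eqxx.
move=> i /negbTE ij; rewrite /h ij.
under eq_bigr do rewrite mulr1.
exact: sum_prod1.
Qed.

Lemma count_pairs M : \sum_(k < M) \sum_(l < M) ind R (l != k) = M%:R * (M%:R - 1).
Proof.
under eq_bigr => k _.
  have -> : \sum_(l < M) ind R (l != k) = \sum_(l < M) (1 - ind R (l == k)).
    by apply: eq_bigr => l _; rewrite /ind; case: (l == k) => /=; lra.
  rewrite sumrB sumr_const card_ord (bigD1 k) //= big1 ?addr0 /ind ?eqxx; last first.
    by move=> l /negbTE ->.
  over.
by rewrite sumr_const card_ord mulr_natl.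
Qed.
End Assembly.


Lemma Ei (R : realType) (X : finType) (M N n : nat)
  (P : 'I_M -> X -> R) (dec : trainT X M N -> testT X n -> 'I_M) (d e : R) (i : 'I_M) :
  (0 < n)%N -> (0 < N)%N ->
  (forall i, is_distr (P i)) -> @DGL_rule R X M N n dec ->
  0 <= d -> 0 <= e ->
  (forall k l, k != l -> 4 * d + 2 * e <= tvdist (P k) (P l)) ->
  \sum_(t : trainT X M N) \sum_(x : testT X n)
     (if dec t x != i then Ptrain P t * Ptest P i x else 0) <=
  M%:R * 2 ^+ #|X| * expR (- (2 * N%:R * d ^+ 2)) +
  M%:R * (M%:R - 1) * (2 * expR (- (2 * n%:R * e ^+ 2))).
Proof.
move=> n1 N1 hP hdec d0 e0 hD.
set K1 := expR (- (2 * N%:R * d ^+ 2)).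
set K2 := expR (- (2 * n%:R * e ^+ 2)).
pose cT (j : 'I_M) (F : {set X}) (s : {ffun 'I_N -> X}) :=
  d <= (cnt s F)%:R / N%:R - PF (P j) F.
pose badT (t : trainT X M N) := [exists j, [exists F, cT j F (t j)]].
pose c1 (t : trainT X M N) k l (x : testT X n) :=
  e <= (cnt x (Aset R t k l))%:R / n%:R - PF (P i) (Aset R t k l).
pose c2 (t : trainT X M N) k l (x : testT X n) :=
  e <= (cnt x (~: Aset R t k l))%:R / n%:R - PF (P i) (~: Aset R t k l).
pose badX (t : trainT X M N) (x : testT X n) := [exists k : 'I_M, [exists l : 'I_M, (k < l)%N && (c1 t k l x || c2 t k l x)]].
have key : forall t x, dec t x != i -> badT t || badX t x.
  move=> t x; apply: contraR; rewrite negb_or => /andP[bT bX].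
  have hT : forall j F, (cnt (t j) F)%:R / N%:R - PF (P j) F < d.
    move=> j F; rewrite ltNge; apply/negP => h; move: bT; apply/negP/negPn.
    by apply/existsP; exists j; apply/existsP; exists F.
  have hX : forall k l : 'I_M, (k < l)%N ->
      (cnt x (Aset R t k l))%:R / n%:R - PF (P i) (Aset R t k l) < e /\
      (cnt x (~: Aset R t k l))%:R / n%:R - PF (P i) (~: Aset R t k l) < e.
    move=> k l kl; rewrite !ltNge; split; apply/negP => h; move: bX; apply/negP/negPn;
    apply/existsP; exists k; apply/existsP; exists l; rewrite kl /=.
      by rewrite /c1 h.
    by rewrite /c2 h orbT.
  have := core (i := i) N1 n1 hP e0 hD hT hX.
  move=> hc; case: (eqVneq (dec t x) i) => // ne.
  have := hc _ ne; have := hdec t x i; lra.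
have Pt0 : forall t : trainT X M N, 0 <= Ptrain P t.
  by move=> t; rewrite /Ptrain; apply: prodr_ge0 => j _; apply: prodr_ge0 => k _; case: (hP j).
have Px0 : forall x : testT X n, 0 <= Ptest P i x.
  by move=> x; rewrite /Ptest; apply: prodr_ge0 => k _; case: (hP i).
apply: (@le_trans _ _ (\sum_(t : trainT X M N) \sum_(x : testT X n)
   (Ptrain P t * Ptest P i x * ind R (badT t) + Ptrain P t * (Ptest P i x * ind R (badX t x))))).
  apply: ler_sum => t _; apply: ler_sum => x _.
  case: ifPn => h; last first.
    apply: addr_ge0; [apply: mulr_ge0; [apply: mulr_ge0|apply: ind_ge0] | apply: mulr_ge0; [|apply: mulr_ge0; [|apply: ind_ge0]]]; done.
  have := key t x h; rewrite /ind.
  case: (badT t); case: (badX t x) => //= _; rewrite ?mulr1 ?mulr0 ?addr0 ?add0r //.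
  by rewrite lerDl; apply: mulr_ge0.
rewrite (eq_bigr _ (fun t _ => big_split _ _ _ _ _)) big_split /=.
apply: lerD.
-
  have -> : \sum_(t : trainT X M N) \sum_(x : testT X n) Ptrain P t * Ptest P i x * ind R (badT t)
          = \sum_(t : trainT X M N) Ptrain P t * ind R (badT t).
    apply: eq_bigr => t _.
    under eq_bigr do rewrite mulrAC.
    by rewrite -mulr_sumr /Ptest (sum_prod1 _ (hP i)) mulr1.
  apply: (@le_trans _ _ (\sum_(t : trainT X M N) Ptrain P t *
                  \sum_j \sum_F ind R (cT j F (t j)))).
    apply: ler_sum => t _; apply: ler_wpM2l => //.
    apply: le_trans (union_bound _ _) _; apply: ler_sum => j _.
    exact: union_bound.
  under eq_bigr do rewrite mulr_sumr.
  rewrite exchange_big /=.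
  apply: (@le_trans _ _ (\sum_(j < M) \sum_(F : {set X}) K1)).
    apply: ler_sum => j _.
    under eq_bigr do rewrite mulr_sumr.
    rewrite exchange_big /=; apply: ler_sum => F _.
    rewrite (train_marg j (fun s => ind R (cT j F s)) hP).
    exact: tail.
  rewrite sumr_const sumr_const card_ord card_setX.
  have -> : K1 *+ 2 ^ #|X| *+ M = M%:R * 2 ^+ #|X| * K1.
    rewrite -mulrnA -[K1 *+ _]mulr_natl natrM natrX; ring.
  by [].
-
  apply: (@le_trans _ _ (\sum_(t : trainT X M N) Ptrain P t * (M%:R * (M%:R - 1) * (2 * K2)))).
    apply: ler_sum => t _.
    rewrite -mulr_sumr; apply: ler_wpM2l => //.
    apply: (@le_trans _ _ (\sum_(x : testT X n) Ptest P i x *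
        \sum_k \sum_l ind R (l != k) * (ind R (c1 t k l x) + ind R (c2 t k l x)))).
      apply: ler_sum => x _; apply: ler_wpM2l => //.
      apply: le_trans (union_bound _ _) _; apply: ler_sum => k _.
      apply: le_trans (union_bound _ _) _; apply: ler_sum => l _.
      rewrite /ind; case: ltngtP => kl /=.
      + have lk : l != k by rewrite neq_ltn kl orbT.
        rewrite lk mul1r; case: (c1 t k l x); case: (c2 t k l x) => //=; lra.
      + by case: (l != k); case: (c1 t k l x); case: (c2 t k l x) => //=; lra.
      + by case: (l != k); case: (c1 t k l x); case: (c2 t k l x) => //=; lra.
    under eq_bigr do rewrite mulr_sumr.
    rewrite exchange_big /= -count_pairs mulr_suml; apply: ler_sum => k _.
    under eq_bigr do rewrite mulr_sumr.
    rewrite exchange_big /= mulr_suml; apply: ler_sum => l _.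
    under eq_bigr do rewrite mulrCA.
    rewrite -mulr_sumr; apply: ler_wpM2l; first exact: ind_ge0.
    under eq_bigr do rewrite mulrDr.
    rewrite big_split /= mulr2n.
    rewrite mulrDl mul1r /Ptest; apply: lerD; exact: tail.
  rewrite -mulr_suml.
  have -> : \sum_(t : trainT X M N) Ptrain P t = 1.
    have := train_marg (N:=N) i (fun _ => 1) hP.
    under eq_bigr do rewrite mulr1.
    move=> ->; under eq_bigr do rewrite mulr1.
    exact: sum_prod1.
  by rewrite mul1r.
Qed.


Unset Implicit Arguments.
Theorem corollary1 (R : realType) (X : finType) (M N n : nat)
  (P : 'I_M -> X -> R) (pi : 'I_M -> R)
  (dec : trainT X M N -> testT X n -> 'I_M) :
  (2 <= M)%N -> (1 <= n)%N -> (1 <= N)%N ->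
  (forall i, @is_distr R X (P i)) ->
  (forall i, 0 < pi i) -> \sum_(i < M) pi i = 1 ->
  @DGL_rule R X M N n dec ->
  let alpha := N%:R / n%:R : R in
  let D := @Dmin R X M P in
  @err_CL R X M N n P pi dec <=
    2 * M%:R * expR (- (n%:R *
      (alpha * D ^+ 2 / (2 * (2 + Num.sqrt alpha) ^+ 2)
       - Num.max (2 * ln (M.-1)%:R / n%:R) (#|X|%:R * ln 2 / n%:R)))).
Proof.
move=> M2 n1 N1 hP pi0 pisum hdec; cbv zeta.
set alpha := N%:R / n%:R.
set D := Dmin P.
have npos : 0 < n%:R :> R by rewrite ltr0n.
have Npos : 0 < N%:R :> R by rewrite ltr0n.
have a0 : 0 < alpha by rewrite /alpha divr_gt0.
set s := Num.sqrt alpha.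
have s0 : 0 <= s by apply: sqrtr_ge0.
have ss : s ^+ 2 = alpha by rewrite sqr_sqrtr // ltW.
have tv0 : forall k l, 0 <= tvdist (P k) (P l).
  by move=> k l; rewrite /tvdist mulr_ge0 ?invr_ge0 // sumr_ge0.
have D0 : 0 <= D.
  rewrite /D /Dmin; apply: le_bigmin => // k _; apply: le_bigmin => // l _.
have hD : forall k l : 'I_M, k != l -> D <= tvdist (P k) (P l).
  move=> k l kl; rewrite /D /Dmin.
  apply: le_trans (bigmin_le _ k _) _.
  by apply: bigmin_le_cond; rewrite eq_sym.
set d := D / (2 * (2 + s)).
set e := s * d.
have s2 : 0 < 2 + s by lra.
have d0 : 0 <= d by rewrite /d divr_ge0 // mulr_ge0 // ltW.
have e0 : 0 <= e by rewrite /e mulr_ge0.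
have Dde : 4 * d + 2 * e = D.
  rewrite /e /d; field; lra.
have hD' : forall k l : 'I_M, k != l -> 4 * d + 2 * e <= tvdist (P k) (P l).
  by move=> k l kl; rewrite Dde; apply: hD.
set K := expR (- (2 * N%:R * d ^+ 2)).
have Ke : expR (- (2 * n%:R * e ^+ 2)) = K.
  rewrite /K /e exprMn ss /alpha; congr (expR _); field; lra.
set B := M%:R * 2 ^+ #|X| * K + M%:R * (M%:R - 1) * (2 * K).
have hE : forall i, \sum_(t : trainT X M N) \sum_(x : testT X n)
     (if dec t x != i then Ptrain P t * Ptest P i x else 0) <= B.
  move=> i; have := Ei i n1 N1 hP hdec d0 e0 hD'.
  by rewrite Ke.
apply: (@le_trans _ _ (\sum_(i < M) pi i * B)).
  by apply: ler_sum => i _; apply: ler_wpM2l; [apply: ltW | apply: hE].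
rewrite -mulr_suml pisum mul1r.
set mx := Num.max _ _.
have ex : - (n%:R * (alpha * D ^+ 2 / (2 * (2 + s) ^+ 2) - mx)) =
          - (2 * N%:R * d ^+ 2) + n%:R * mx.
  rewrite /d /alpha; field; lra.
rewrite ex expRD -/K.
set Y := expR (n%:R * mx).
have X1 : (0 < #|X|)%N.
  case: (pickP (@predT X)) => [a _|h]; first by apply/card_gt0P; exists a.
  have := (hP (Ordinal (leq_trans (isT : (0 < 2)%N) M2))).2.
  by rewrite big_pred0 // => /eqP; rewrite eq_sym oner_eq0.
have two : 2 <= 2 ^+ #|X| :> R.
  rewrite -natrX ler_nat.
  by rewrite -{1}(expn1 2) leq_pexp2l.
have Y1 : 2 ^+ #|X| <= Y.
  have hm : #|X|%:R * ln 2 / n%:R <= mx by rewrite /mx le_max lexx orbT.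
  have : #|X|%:R * ln 2 <= n%:R * mx.
    by move: hm; rewrite ler_pdivrMr //; lra.
  rewrite /Y -ler_expR expRM_natl lnK //.
  by rewrite posrE.
have hm1 : (M.-1)%:R = M%:R - 1 :> R.
  by rewrite -subn1 natrB // (leq_trans _ M2).
have M1 : 1 <= M%:R - 1 :> R.
  have : 2 <= M%:R :> R by rewrite ler_nat.
  lra.
have Y2 : (M%:R - 1) ^+ 2 <= Y.
  have hm : 2 * ln (M.-1)%:R / n%:R <= mx by rewrite /mx le_max lexx.
  have : 2 * ln (M.-1)%:R <= n%:R * mx.
    by move: hm; rewrite ler_pdivrMr //; lra.
  rewrite /Y -ler_expR expRM_natl lnK hm1 //.
  by rewrite posrE; lra.
have hw : 2 * (M%:R - 1) <= Y.
  case: (ltngtP M 2) => hM.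
  - by move: M2; rewrite leqNgt hM.
  - have : 3 <= M%:R :> R by rewrite ler_nat.
    move=> h3; apply: le_trans Y2; nra.
  - by rewrite hM; lra.
have K0 : 0 <= K by apply: expR_ge0.
have M0 : 0 <= M%:R :> R by apply: ler0n.
have : 0 <= M%:R * K by apply: mulr_ge0.
rewrite /B.
nra.
Qed.
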